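(* Let $\mathfrak{S}=(\mathcal{X},\mathsf{S},\gamma,(\Lambda_{a})_{a\in\mathcal{A}})$ be a spectral decomposition system for the Euclidean space $\mathfrak{H}$ with spectral-induced ordering mapping $\tau$, and let $x,y\in\mathcal{X}$. Then: (i) $\tau\circ\tau=\tau$; (ii) for every $a\in\mathcal{A}$, $\|\Lambda_ax\|=\|x\|=\|\tau(x)\|$; (iii) $\langle x,y\rangle\leq\langle\tau(x),\tau(y)\rangle$; (iv) $\langle\tau(x),\tau(y)\rangle=\max_{s\in\mathsf{S}}\langle s\cdot x,y\rangle$; (v) $\|\tau(x)-\tau(y)\|\leq\|x-y\|$; (vi) the range of $\tau$ is a closed convex cone in $\mathcal{X}$; (vii) the orbit $\mathsf{S}\cdot x$ is compact.
   Context: A Euclidean space is a finite-dimensional real inner product space; inner products are written $\langle\cdot,\cdot\rangle$ and norms $\|\cdot\|$. Let $\mathfrak{H}$ and $\mathcal{X}$ be Euclidean spaces, let $\mathsf{S}$ be a group acting on $\mathcal{X}$ by linear isometries, let $\gamma\colon\mathfrak{H}\to\mathcal{X}$, and let $(\Lambda_a)_{a\in\mathcal{A}}$ be a family of linear operators from $\mathcal{X}$ to $\mathfrak{H}$. The orbit of $x$ is $\mathsf{S}\cdot x=\{s\cdot x: s\in\mathsf{S}\}$; a map $f$ on $\mathcal{X}$ is $\mathsf{S}$-invariant if $f(s\cdot x)=f(x)$ for all $s,x$. The tuple is a spectral decomposition system for $\mathfrak{H}$ if: [A] every $\Lambda_a$ is an isometry; [B] there exists an $\mathsf{S}$-invariant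 $\tau\colon\mathcal{X}\to\mathcal{X}$ with $\tau(x)\in\mathsf{S}\cdot x$ for all $x$ and $\gamma\circ\Lambda_a=\tau$ for all $a$; [C] for every $X\in\mathfrak{H}$ there is $a$ with $X=\Lambda_a\gamma(X)$; [D] $\langle X,Y\rangle\leq\langle\gamma(X),\gamma(Y)\rangle$ for all $X,Y\in\mathfrak{H}$. The map $\tau$ in [B] is the spectral-induced ordering mapping. *)

(* Defs.v *)
From HB Require Import structures.
From mathcomp Require Import all_boot all_order all_algebra.
From mathcomp Require Import all_classical all_reals all_analysis.
Set Implicit Arguments. Unset Strict Implicit. Unset Printing Implicit Defensive.
Import Order.TTheory GRing.Theory Num.Theory.
Import numFieldNormedType.Exports.
Local Open Scope ring_scope.
Local Open Scope classical_set_scope.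

(* Euclidean spaces are modelled as R^n = 'rV[R]_n with the standard inner
   product (every Euclidean space is isometric to such a space). *)
Definition dotp (R : realType) (n : nat) (u v : 'rV[R]_n) : R :=
  \sum_(i < n) u ord0 i * v ord0 i.

Definition enorm (R : realType) (n : nat) (u : 'rV[R]_n) : R :=
  Num.sqrt (dotp u u).

Definition is_linear_map (R : realType) (n m : nat) (f : 'rV[R]_n -> 'rV[R]_m) :=
  forall (a : R) (u v : 'rV[R]_n), f (a *: u + v) = a *: f u + f v.

Definition group_acting_by_linear_isometries (R : realType) (n : nat)
  (G : Type) (mul : G -> G -> G) (one : G) (inv : G -> G)
  (act : G -> 'rV[R]_n -> 'rV[R]_n) : Prop :=
  [/\ (forall g h k, mul g (mul h k) = mul (mul g h) k),
      (forall g, mul one g = g /\ mul g one = g) &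
      (forall g, mul (inv g) g = one /\ mul g (inv g) = one)] /\
  [/\ (forall x, act one x = x),
      (forall g h x, act (mul g h) x = act g (act h x)) &
      (forall g, is_linear_map (act g) /\ forall x, enorm (act g x) = enorm x)].

Definition act_orbit (R : realType) (n : nat) (G : Type)
  (act : G -> 'rV[R]_n -> 'rV[R]_n) (x : 'rV[R]_n) : set 'rV[R]_n :=
  [set act s x | s in [set: G]].

Definition spectral_ordering_map (R : realType) (m n : nat) (G : Type)
  (act : G -> 'rV[R]_n -> 'rV[R]_n) (gamma : 'rV[R]_m -> 'rV[R]_n)
  (A : Type) (Lam : A -> 'rV[R]_n -> 'rV[R]_m) (tau : 'rV[R]_n -> 'rV[R]_n) : Prop :=
  [/\ (forall s x, tau (act s x) = tau x),
      (forall x, act_orbit act x (tau x)) &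
      (forall a x, gamma (Lam a x) = tau x)].

(* Spectral decomposition system (X, S, gamma, (Lam_a)_a) for H = R^m, X = R^n. *)
Definition spectral_decomposition_system (R : realType) (m n : nat) (G : Type)
  (mul : G -> G -> G) (one : G) (inv : G -> G)
  (act : G -> 'rV[R]_n -> 'rV[R]_n) (gamma : 'rV[R]_m -> 'rV[R]_n)
  (A : Type) (Lam : A -> 'rV[R]_n -> 'rV[R]_m) : Prop :=
  group_acting_by_linear_isometries mul one inv act /\
  (forall a, is_linear_map (Lam a)) /\
  [/\ (forall a x, enorm (Lam a x) = enorm x),
      (exists tau, spectral_ordering_map act gamma Lam tau),
      (forall X : 'rV[R]_m, exists a, X = Lam a (gamma X)) &
      (forall X Y : 'rV[R]_m, dotp X Y <= dotp (gamma X) (gamma Y))].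

(* Main.v *)
From HB Require Import structures.
From mathcomp Require Import all_boot all_order all_algebra.
From mathcomp Require Import all_classical all_reals all_analysis.
From mathcomp Require Import lra.
Require Import Defs.
Set Implicit Arguments. Unset Strict Implicit. Unset Printing Implicit Defensive.
Import Order.TTheory GRing.Theory Num.Theory.
Import numFieldNormedType.Exports.
Local Open Scope ring_scope.
Local Open Scope classical_set_scope.

Section dot.
Variables (R : realType) (n : nat).
Implicit Types u v w : 'rV[R]_n.

Lemma dotpC u v : dotp u v = dotp v u.
Proof. by apply: eq_bigr => i _; rewrite mulrC. Qed.

Lemma dotpDl u v w : dotp (u + v) w = dotp u w + dotp v w.
Proof. by rewrite /dotp -big_split; apply: eq_bigr => i _; rewrite mxE mulrDl. Qed.

Lemma dotpZl a u w : dotp (a *: u) w = a * dotp u w.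
Proof. by rewrite /dotp mulr_sumr; apply: eq_bigr => i _; rewrite mxE mulrA. Qed.

Lemma dotpNl u w : dotp (- u) w = - dotp u w.
Proof. by rewrite -scaleN1r dotpZl mulN1r. Qed.

Lemma dotpDr u v w : dotp w (u + v) = dotp w u + dotp w v.
Proof. by rewrite dotpC dotpDl !(dotpC w). Qed.

Lemma dotpZr a u w : dotp w (a *: u) = a * dotp w u.
Proof. by rewrite dotpC dotpZl dotpC. Qed.

Lemma dotpNr u w : dotp w (- u) = - dotp w u.
Proof. by rewrite dotpC dotpNl dotpC. Qed.

Lemma dotp_ge0 u : 0 <= dotp u u.
Proof. by apply: sumr_ge0 => i _; rewrite -expr2 sqr_ge0. Qed.

Lemma dotp_eq0 u : dotp u u = 0 -> u = 0.
Proof.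
move=> H; apply/rowP => i; rewrite mxE.
have := @psumr_eq0P _ _ _ (fun i => u ord0 i * u ord0 i) _ H i isT.
by move=> /(_ _)/eqP; rewrite mulf_eq0 orbb => /(_ _)/eqP; apply => j _; rewrite -expr2 sqr_ge0.
Qed.

Lemma enorm_sq u : enorm u ^+ 2 = dotp u u.
Proof. by rewrite sqr_sqrtr // dotp_ge0. Qed.

Lemma enorm_eq u v : dotp u u = dotp v v -> enorm u = enorm v.
Proof. by rewrite /enorm => ->. Qed.


Lemma enorm_le u v : dotp u u <= dotp v v -> enorm u <= enorm v.
Proof. by move=> H; rewrite /enorm ler_sqrt // dotp_ge0. Qed.

Lemma dotpBB u v : dotp (u - v) (u - v) = dotp u u + dotp v v - (dotp u v + dotp u v).
Proof.
rewrite dotpDl !dotpDr !dotpNl !dotpNr (dotpC v u); lra.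
Qed.

Lemma dotpDD u v : dotp (u + v) (u + v) = dotp u u + dotp v v + (dotp u v + dotp u v).
Proof.
rewrite dotpDl !dotpDr (dotpC v u); lra.
Qed.

End dot.

Lemma enorm_eqP (R : realType) n k (u : 'rV[R]_n) (v : 'rV[R]_k) :
  enorm u = enorm v -> dotp u u = dotp v v.
Proof. by move=> H; rewrite -enorm_sq -(enorm_sq v) H. Qed.

Lemma iso_dot (R : realType) (n m : nat) (f : 'rV[R]_n -> 'rV[R]_m) : is_linear_map f ->
  (forall x, enorm (f x) = enorm x) -> forall u v, dotp (f u) (f v) = dotp u v.
Proof.
move=> lin iso u v.
have fD : f (u + v) = f u + f v by have := lin 1 u v; rewrite !scale1r.
have := enorm_eqP (iso (u + v)); rewrite fD !dotpDD.
rewrite (enorm_eqP (iso u)) (enorm_eqP (iso v)) => H; lra.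
Qed.

Lemma sup_le_enorm (R : realType) n (u : 'rV[R]_n) : `|u| <= enorm u.
Proof.
rewrite [leLHS]/Num.norm /= mx_normrE.
apply/bigmax_leP; split; first by rewrite sqrtr_ge0.
move=> [i j] _ /=; rewrite (ord1 i) -sqrtr_sqr /enorm ler_sqrt ?dotp_ge0 //.
by rewrite /dotp (bigD1 j) //= -expr2 -real_normK ?num_real // lerDl sumr_ge0 // => k _; rewrite -expr2 sqr_ge0.
Qed.

Lemma coord_le_sup (R : realType) n (u : 'rV[R]_n) j : `|u ord0 j| <= `|u|.
Proof.
rewrite [leRHS]/Num.norm /= mx_normrE.
by apply/bigmax_geP; right; exists (ord0, j).
Qed.

Lemma enorm_le_sup (R : realType) n (u : 'rV[R]_n) : enorm u <= n%:R * `|u|.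
Proof.
rewrite -[n%:R * _]ger0_norm ?mulr_ge0 // -sqrtr_sqr /enorm ler_sqrt ?sqr_ge0 //.
apply: (@le_trans _ _ (\sum_(i < n) `|u|^+2)).
  apply: ler_sum => i _; rewrite -expr2 -real_normK ?num_real //.
  by rewrite lerXn2r ?nnegrE // coord_le_sup.
rewrite sumr_const card_ord exprMn -[_ *+ n]mulr_natl.
apply: ler_wpM2r; first exact: sqr_ge0.
by rewrite -natrX ler_nat; case: n u => // k _; rewrite expnS leq_pmulr // expn_gt0.
Qed.

Lemma lip_cont (R : realType) n (f : 'rV[R]_n -> 'rV[R]_n) (k : R) : 0 < k ->
  (forall u v, `|f u - f v| <= k * `|u - v|) -> continuous f.
Proof.
move=> k0 H u; apply/(@cvgrPdist_lt _ _ _ (nbhs u) _) => e e0.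
apply/(@nbhs_normP R _ (u : 'rV[R]_n) (fun t => `|f u - f t| < e)).
exists (e / k) => /=; first by rewrite divr_gt0.
move=> v /= uv; apply: le_lt_trans (H u v) _.
by rewrite -ltr_pdivlMl // mulrC.
Qed.

Theorem proposition3p3 (R : realType) (m n : nat) (G : Type)
  (mul : G -> G -> G) (one : G) (inv : G -> G)
  (act : G -> 'rV[R]_n -> 'rV[R]_n) (gamma : 'rV[R]_m -> 'rV[R]_n)
  (A : Type) (Lam : A -> 'rV[R]_n -> 'rV[R]_m) (tau : 'rV[R]_n -> 'rV[R]_n) :
  spectral_decomposition_system mul one inv act gamma Lam ->
  spectral_ordering_map act gamma Lam tau ->
  forall x y : 'rV[R]_n,
  [/\ (forall z, tau (tau z) = tau z),
      (forall a, enorm (Lam a x) = enorm x /\ enorm x = enorm (tau x)) &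
      dotp x y <= dotp (tau x) (tau y)] /\
  [/\
      ((exists s, dotp (act s x) y = dotp (tau x) (tau y)) /\
       (forall s, dotp (act s x) y <= dotp (tau x) (tau y))),
      enorm (tau x - tau y) <= enorm (x - y),
      (closed (range tau) /\
       (forall u v, range tau u -> range tau v -> forall a b : R,
          0 <= a -> 0 <= b -> range tau (a *: u + b *: v))) &
      compact (act_orbit act x)].
Proof.
move=> [[[_ _ ginv] [act1 actM actli]] [Lamlin [LamIso _ HC HD]]] [tauinv tauorb gamLam].
have act_dot g : forall u v, dotp (act g u) (act g v) = dotp u v.
  by apply: iso_dot; [exact: (actli g).1 | exact: (actli g).2].
have Lam_dot a : forall u v, dotp (Lam a u) (Lam a v) = dotp u v.
  by apply: iso_dot; [exact: Lamlin | exact: LamIso].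
have act_inv t z : act (inv t) (act t z) = z by rewrite -actM (ginv t).1 act1.
have [a0 _] := HC 0.
have key u v : dotp u v <= dotp (tau u) (tau v).
  by rewrite -(Lam_dot a0) -!(gamLam a0); exact: HD.
have tau_self u : dotp (tau u) (tau u) = dotp u u.
  by have [s _ <-] := tauorb u; rewrite act_dot.
have tau_idem z : tau (tau z) = tau z by have [s _ hs] := tauorb z; rewrite -{1}hs tauinv.
have tau_lipE u v : enorm (tau u - tau v) <= enorm (u - v).
  apply: enorm_le; rewrite !dotpBB !tau_self; have := key u v; lra.
have tau_lip u v : `|tau u - tau v| <= (n%:R + 1) * `|u - v|.
  apply: le_trans (sup_le_enorm _) _; apply: le_trans (tau_lipE u v) _.
  apply: le_trans (enorm_le_sup _) _; apply: ler_wpM2r => //; lra.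
have tau_cont : continuous tau.
  by apply: (lip_cont (k := n%:R + 1)) => //; rewrite ltr_wpDl.
have hclosed1 (z : 'rV[R]_n) : closed [set z].
  exact/accessible_closed_set1/hausdorff_accessible/norm_hausdorff.
split; first split => //.
- move=> a; split; first exact: LamIso.
  by apply: enorm_eq; rewrite tau_self.
split => //.
- split.
  + have [s _ hs] := tauorb x; have [t _ ht] := tauorb y.
    exists (mul (inv t) s); rewrite actM hs -ht.
    by rewrite -(act_dot t (act (inv t) (tau x)) y) -actM (ginv t).2 act1.
  + by move=> s; rewrite -(tauinv s x); exact: key.
- split.
  + have -> : range tau = (fun u => tau u - u) @^-1` [set 0].
      apply/seteqP; split => u /=.
        by move=> [w _ <-]; rewrite tau_idem subrr.
      by move/eqP; rewrite subr_eq0 => /eqP <-; exists u.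
    apply: (proj1 (continuous_closedP _)) (hclosed1 0).
    apply: (lip_cont (k := n%:R + 2)); first by rewrite ltr_wpDl.
    move=> u v; rewrite opprB [v - tau v]addrC addrACA.
    apply: le_trans (ler_normD _ _) _; rewrite [- u + v]addrC [`|v - u|]distrC.
    apply: le_trans (lerD (tau_lip u v) (lexx _)) _.
    lra.
  + move=> _ _ [u0 _ <-] [v0 _ <-] a b a0' b0'.
    set u := tau u0; set v := tau v0.
    have hu : tau u = u by rewrite tau_idem.
    have hv : tau v = v by rewrite tau_idem.
    set w := a *: u + b *: v.
    have hw : w = a *: u + b *: v by [].
    clearbody w.
    exists w => //.
    have h1 : dotp w w <= dotp (tau w) w.
      have e1 : dotp w w = a * dotp u w + b * dotp v w.
        by rewrite {1}hw dotpDl !dotpZl.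
      have e2 : dotp (tau w) w = a * dotp (tau w) u + b * dotp (tau w) v.
        by rewrite {2}hw dotpDr !dotpZr.
      rewrite e1 e2; apply: lerD; apply: ler_wpM2l => //.
        by rewrite dotpC -{2}hu; exact: key.
      by rewrite dotpC -{2}hv; exact: key.
    apply/eqP; rewrite -subr_eq0; apply/eqP/dotp_eq0.
    apply/eqP; rewrite eq_le dotp_ge0 andbT dotpBB tau_self; lra.
- apply: bounded_closed_compact.
    exists (enorm x); split; first exact: num_real.
    move=> M hM z [s _ <-]; apply: le_trans (sup_le_enorm _) _.
    rewrite (enorm_eq (act_dot s x x)); exact: ltW.
  have -> : act_orbit act x = tau @^-1` [set tau x].
    apply/seteqP; split => z /=.
      by move=> [s _ <-]; rewrite tauinv.
    move=> hz; have [t _ ht] := tauorb z; have [s _ hs] := tauorb x.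
    exists (mul (inv t) s) => //; rewrite actM hs -hz -ht; exact: act_inv.
  exact: (proj1 (continuous_closedP _)).
Qed.
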